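(* For every modal proposition $A$: (1) if $A\in\mathsf{NOI}$ then $\mathsf{iK4}+\mathsf{CP}_a\vdash A\to\Box A$; (2) $\mathsf{iK4}\vdash A^l\to A$; (3) if $A\in\mathsf{NOI}$ then $\mathsf{iK4}+\mathsf{CP}_a\vdash A^l\leftrightarrow A$; (4) $\mathsf{LLe}^+\vdash\Box A^l\leftrightarrow\Box A$.
   Context: Modal language: propositional variables, $\bot$, $\wedge,\vee,\to$, $\Box$; atomic = variables and $\bot$; $\boxdot A:=A\wedge\Box A$. $\mathsf{iK4}$: intuitionistic propositional logic in the modal language plus $\Box(A\to B)\to(\Box A\to\Box B)$ and $\Box A\to\Box\Box A$, closed under modus ponens and necessitation; $\mathsf{iGL}$: $\mathsf{iK4}$ plus $\Box(\Box A\to A)\to\Box A$. $\mathsf{CP}_a$: $p\to\Box p$ for atomic $p$. $\mathsf{NOI}$: propositions in which every $\to$ lies in the scope of a $\Box$. Leivant's translation: $A^l=A$ for atomic/boxed $A$; $(A\wedge B)^l=A^l\wedge B^l$; $(A\vee B)^l=\boxdot A^l\vee\boxdot B^l$; $(A\to B)^l=A\to B^l$ if $A\in\mathsf{NOI}$, else $A\to B$. $\mathsf{LLe}^+:=\mathsf{iGL}+\{\Box A\to\Box A^l\}+\mathsf{CP}_a$. *)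

(* Defs.v *)
Inductive form : Type :=
| Var : nat -> form
| Bot : form
| And : form -> form -> form
| Or  : form -> form -> form
| Imp : form -> form -> form
| Box : form -> form.

Definition Iff (A B : form) : form := And (Imp A B) (Imp B A).
Definition BoxDot (A : form) : form := And A (Box A).

Definition atomic (A : form) : Prop :=
  match A with Var _ | Bot => True | _ => False end.

(* NOI: every implication lies in the scope of a box *)
Fixpoint noi (A : form) : bool :=
  match A with
  | Var _ | Bot => true
  | And B C | Or B C => noi B && noi C
  | Imp _ _ => false
  | Box _ => true
  end.

Fixpoint leiv (A : form) : form :=
  match A with
  | Var n => Var n
  | Bot => Bot
  | Box B => Box B
  | And B C => And (leiv B) (leiv C)
  | Or B C => Or (BoxDot (leiv B)) (BoxDot (leiv C))
  | Imp B C => if noi B then Imp B (leiv C) else Imp B C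
  end.

Inductive prv (L : form -> Prop) : form -> Prop :=
| ax1 A B : prv L (Imp A (Imp B A))
| ax2 A B C : prv L (Imp (Imp A (Imp B C)) (Imp (Imp A B) (Imp A C)))
| ax3 A B : prv L (Imp (And A B) A)
| ax4 A B : prv L (Imp (And A B) B)
| ax5 A B : prv L (Imp A (Imp B (And A B)))
| ax6 A B : prv L (Imp A (Or A B))
| ax7 A B : prv L (Imp B (Or A B))
| ax8 A B C : prv L (Imp (Imp A C) (Imp (Imp B C) (Imp (Or A B) C)))
| ax9 A : prv L (Imp Bot A)
| axK A B : prv L (Imp (Box (Imp A B)) (Imp (Box A) (Box B)))
| ax4' A : prv L (Imp (Box A) (Box (Box A)))
| axL A : L A -> prv L A
| mp A B : prv L (Imp A B) -> prv L A -> prv L B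
| nec A : prv L A -> prv L (Box A).

Definition iK4_ax (A : form) : Prop := False.

Definition CPa_ax (A : form) : Prop := exists p, atomic p /\ A = Imp p (Box p).

Definition Lob_ax (A : form) : Prop :=
  exists B, A = Imp (Box (Imp (Box B) B)) (Box B).

Definition Leiv_ax (A : form) : Prop := exists B, A = Imp (Box B) (Box (leiv B)).

Definition iK4CPa_ax (A : form) : Prop := CPa_ax A.

Definition LLeplus_ax (A : form) : Prop := Lob_ax A \/ Leiv_ax A \/ CPa_ax A.

(* Main.v *)
Require Import Defs.
From Stdlib Require Import Bool.

Section Tools.
Variable L : form -> Prop.

Lemma p_id A : prv L (Imp A A).
Proof.
  eapply mp. eapply mp. apply (ax2 L A (Imp A A) A). apply ax1. apply (ax1 L A A).
Qed.

Lemma p_trans A B C : prv L (Imp A B) -> prv L (Imp B C) -> prv L (Imp A C).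
Proof.
  intros H1 H2. eapply mp. eapply mp. apply (ax2 L A B C).
  eapply mp. apply ax1. exact H2. exact H1.
Qed.

Lemma p_andI A B C : prv L (Imp A B) -> prv L (Imp A C) -> prv L (Imp A (And B C)).
Proof.
  intros H1 H2. eapply mp. eapply mp. apply (ax2 L A C (And B C)).
  eapply p_trans. exact H1. apply ax5. exact H2.
Qed.

Lemma p_orE A B C : prv L (Imp A C) -> prv L (Imp B C) -> prv L (Imp (Or A B) C).
Proof. intros H1 H2. eapply mp. eapply mp. apply ax8. exact H1. exact H2. Qed.

Lemma p_cons A B C : prv L (Imp B C) -> prv L (Imp (Imp A B) (Imp A C)).
Proof. intros H. eapply mp. apply ax2. eapply mp. apply ax1. exact H. Qed.

Lemma p_boxm A B : prv L (Imp A B) -> prv L (Imp (Box A) (Box B)).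
Proof. intros H. eapply mp. apply axK. apply nec. exact H. Qed.

Lemma p_uncurry X Y Z : prv L (Imp X (Imp Y Z)) -> prv L (Imp (And X Y) Z).
Proof.
  intros H. eapply mp. eapply mp. apply (ax2 L (And X Y) Y Z).
  eapply p_trans. apply ax3. exact H. apply ax4.
Qed.

Lemma p_boxand A B : prv L (Imp (And (Box A) (Box B)) (Box (And A B))).
Proof.
  apply p_uncurry. eapply p_trans. apply p_boxm. apply (ax5 L A B). apply axK.
Qed.

Lemma p_iff A B : prv L (Imp A B) -> prv L (Imp B A) -> prv L (Iff A B).
Proof. intros H1 H2. unfold Iff. eapply mp. eapply mp. apply ax5. exact H1. exact H2. Qed.
End Tools.

Lemma weak_iK4 L A : prv iK4_ax A -> prv L A.
Proof.
  induction 1; try solve [constructor]. destruct H.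
  eapply mp; eauto. apply nec; auto.
Qed.

Lemma part1 A : noi A = true -> prv iK4CPa_ax (Imp A (Box A)).
Proof.
  induction A; simpl; intros H; try discriminate.
  - apply axL. exists (Var n). simpl; auto.
  - apply axL. exists Bot. simpl; auto.
  - apply andb_true_iff in H as [H1 H2].
    eapply p_trans. 2: apply p_boxand. apply p_andI.
    eapply p_trans. apply ax3. auto. eapply p_trans. apply ax4. auto.
  - apply andb_true_iff in H as [H1 H2]. apply p_orE.
    eapply p_trans. auto. apply p_boxm. apply ax6.
    eapply p_trans. auto. apply p_boxm. apply ax7.
  - apply ax4'.
Qed.

Lemma part2 A : prv iK4_ax (Imp (leiv A) A).
Proof.
  induction A; simpl; try apply p_id.
  - apply p_andI. eapply p_trans. apply ax3. auto. eapply p_trans. apply ax4. auto.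
  - apply p_orE.
    eapply p_trans. apply ax3. eapply p_trans. exact IHA1. apply ax6.
    eapply p_trans. apply ax3. eapply p_trans. exact IHA2. apply ax7.
  - destruct (noi A1). apply p_cons. auto. apply p_id.
Qed.

Lemma part3a A : noi A = true -> prv iK4CPa_ax (Imp A (leiv A)).
Proof.
  induction A; simpl; intros H; try discriminate; try apply p_id.
  - apply andb_true_iff in H as [H1 H2]. apply p_andI.
    eapply p_trans. apply ax3. auto. eapply p_trans. apply ax4. auto.
  - apply andb_true_iff in H as [H1 H2]. apply p_orE.
    + eapply p_trans. 2: apply ax6. unfold BoxDot. apply p_andI. auto.
      eapply p_trans. apply part1; auto. apply p_boxm. auto.
    + eapply p_trans. 2: apply ax7. unfold BoxDot. apply p_andI. auto.
      eapply p_trans. apply part1; auto. apply p_boxm. auto.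
Qed.

Theorem lemma4p20 : forall A : form,
  (noi A = true -> prv iK4CPa_ax (Imp A (Box A))) /\
  prv iK4_ax (Imp (leiv A) A) /\
  (noi A = true -> prv iK4CPa_ax (Iff (leiv A) A)) /\
  prv LLeplus_ax (Iff (Box (leiv A)) (Box A)).
Proof.
  intros A. split; [apply part1|]. split; [apply part2|]. split.
  - intros H. apply p_iff. apply weak_iK4, part2. apply part3a; auto.
  - apply p_iff. apply p_boxm. apply weak_iK4, part2.
    apply axL. right; left. exists A. reflexivity.
Qed.
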